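(* In a sharp theory with purification, for every non-trivial system $\mathrm{A}$ there exists a positive integer $d$ such that (1) every diagonalization of the invariant state $\chi_\mathrm{A}$ consists of exactly $d$ pure states, and (2) all eigenvalues in every such diagonalization equal $1/d$.
   Context: Setting: an operational-probabilistic theory (general probabilistic theory in the circuit framework). It has systems with a symmetric associative composition $\otimes$ and a trivial system $\mathrm{I}$ ($\mathrm{I}\otimes\mathrm{A}=\mathrm{A}$); a system is non-trivial if it is not (operationally equivalent to) $\mathrm{I}$. Transformations are closed under sequential and parallel composition. States of $\mathrm{A}$ are transformations $\mathrm{I}\to\mathrm{A}$, effects are transformations $\mathrm{A}\to\mathrm{I}$, and a state $\rho$ followed by an effect $a$ gives a probability $(a|\rho)\in[0,1]$. Tests are theory-specified collections of transformations representing alternative outcomes of one experiment (observation-tests: tests made of effects); single-outcome tests are channels. States and effects span finite-dimensional real vector spaces; all sets of transformations are convex and compact. A transformation $\mathcal C$ is pure if whenever $\mathcal C=\sum_j\mathcal D_j$ with $\{\mathcal D_j\}$ outcomes of a test, each $\mathcal D_j=p_j\mathcal C$, $p_j\ge0$. A channel is reversible if it has an inverse channel. Every test can be realized as a channel followed by an observation-test on an auxiliary output. A sharp theory with purification satisfies: (Causality) every system has a unique deterministic effect $u_\mathrm{A}$, observation-tests sum to $u_\mathrm{A}$, marginals are $\mathrm{Tr}_\mathrm{B}\rho_{\mathrm{AB}}:=(\mathcal I_\mathrm{A}\otimes u_\mathrm{B})\rho_{\mathrm{AB}}$, and $\rho$ is normalized if $(u_\mathrm{A}|\rho)=1$; (Purity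 Preservation) compositions of pure transformations are pure; (Pure Sharpness) every system has a pure effect $a$ with $(a|\rho)=1$ for some state; (Purification) every normalized state has a purification (a pure normalized state of a composite whose marginal it is), unique up to a reversible channel on the purifying system. The invariant state $\chi_\mathrm{A}$ is the unique normalized state with $\mathcal U\chi_\mathrm{A}=\chi_\mathrm{A}$ for every reversible channel $\mathcal U$ on $\mathrm{A}$ (it exists and is unique in such theories). Normalized states $\{\rho_i\}$ are perfectly distinguishable if some observation-test $\{a_j\}$ has $(a_j|\rho_i)=\delta_{ij}$. A diagonalization of a normalized state $\rho$ is a decomposition $\rho=\sum_{i=1}^rp_i\alpha_i$ with $p_i>0$, $\sum_ip_i=1$, and $\{\alpha_i\}$ perfectly distinguishable normalized pure states; the $p_i$ are its eigenvalues. *)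

(* Defs.v *)
From HB Require Import structures.
From mathcomp Require Import all_boot all_order all_algebra.
From mathcomp Require Import all_classical all_reals all_analysis.
Set Implicit Arguments. Unset Strict Implicit. Unset Printing Implicit Defensive.
Import Order.TTheory GRing.Theory Num.Theory.
Import numFieldTopology.Exports.
Local Open Scope ring_scope.

(* Transformations A -> B are taken up to operational equivalence and       *)
(* embedded in the finite-dimensional real vector space 'rV[R]_(dimT A B)   *)
(* they span; sums are coarse-grainings, scalar multiples are rescalings.   *)
(* Tests are lists of transformations (the outcomes).                       *)

Definition castTr (R : realType) (S : Type) (d : S -> S -> nat)
  (A A' B B' : S) (eA : A = A') (eB : B = B') (x : 'rV[R]_(d A B)) :
  'rV[R]_(d A' B') :=
  match eA in _ = X return 'rV[R]_(d X B') with
  | erefl => match eB in _ = Y return 'rV[R]_(d A Y) with erefl => x end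
  end.

Record OPT (R : realType) := {
  sys : Type;
  sI : sys;
  tens : sys -> sys -> sys;
  tens1s : forall A, tens sI A = A;
  tenss1 : forall A, tens A sI = A;
  tensA : forall A B C, tens A (tens B C) = tens (tens A B) C;
  dimT : sys -> sys -> nat;
  comp : forall A B C, 'rV[R]_(dimT B C) -> 'rV[R]_(dimT A B) -> 'rV[R]_(dimT A C);
  par : forall A B C D, 'rV[R]_(dimT A B) -> 'rV[R]_(dimT C D) ->
          'rV[R]_(dimT (tens A C) (tens B D));
  idT : forall A, 'rV[R]_(dimT A A);
  swapT : forall A B, 'rV[R]_(dimT (tens A B) (tens B A));
  prob : 'rV[R]_(dimT sI sI) -> R;           (* scalars I -> I are numbers *)
  test : forall A B, seq 'rV[R]_(dimT A B) -> Prop;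
  comp_assoc : forall A B C D (h : 'rV_(dimT C D)) (g : 'rV_(dimT B C)) (f : 'rV_(dimT A B)),
      comp h (comp g f) = comp (comp h g) f;
  comp_idl : forall A B (f : 'rV_(dimT A B)), comp (idT B) f = f;
  comp_idr : forall A B (f : 'rV_(dimT A B)), comp f (idT A) = f;
  comp_linl : forall A B C (a : R) (g1 g2 : 'rV_(dimT B C)) (f : 'rV_(dimT A B)),
      comp (a *: g1 + g2) f = a *: comp g1 f + comp g2 f;
  comp_linr : forall A B C (a : R) (g : 'rV_(dimT B C)) (f1 f2 : 'rV_(dimT A B)),
      comp g (a *: f1 + f2) = a *: comp g f1 + comp g f2;
  par_linl : forall A B C D (a : R) (f1 f2 : 'rV_(dimT A B)) (g : 'rV_(dimT C D)),
      par (a *: f1 + f2) g = a *: par f1 g + par f2 g;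
  par_linr : forall A B C D (a : R) (f : 'rV_(dimT A B)) (g1 g2 : 'rV_(dimT C D)),
      par f (a *: g1 + g2) = a *: par f g1 + par f g2;
  par_comp : forall A B C A' B' C' (g : 'rV_(dimT B C)) (f : 'rV_(dimT A B))
      (g' : 'rV_(dimT B' C')) (f' : 'rV_(dimT A' B')),
      par (comp g f) (comp g' f') = comp (par g g') (par f f');
  par_id : forall A B, par (idT A) (idT B) = idT (tens A B);
  par_unitr : forall A B (f : 'rV_(dimT A B)),
      par f (idT sI) = castTr (esym (tenss1 A)) (esym (tenss1 B)) f;
  par_unitl : forall A B (f : 'rV_(dimT A B)),
      par (idT sI) f = castTr (esym (tens1s A)) (esym (tens1s B)) f;
  par_assoc : forall A B C D E F (f : 'rV_(dimT A B)) (g : 'rV_(dimT C D)) (h : 'rV_(dimT E F)),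
      par f (par g h) = castTr (esym (tensA A C E)) (esym (tensA B D F)) (par (par f g) h);
  swap_inv : forall A B, comp (swapT B A) (swapT A B) = idT (tens A B);
  swap_nat : forall A B C D (f : 'rV_(dimT A B)) (g : 'rV_(dimT C D)),
      comp (swapT B D) (par f g) = comp (par g f) (swapT A C);
  prob_lin : forall (a : R) (x y : 'rV_(dimT sI sI)), prob (a *: x + y) = a * prob x + prob y;
  prob_inj : forall x y, prob x = prob y -> x = y;
  prob_id : prob (idT sI) = 1;
  par_scal : forall A B (s : 'rV_(dimT sI sI)) (f : 'rV_(dimT A B)),
      par s f = castTr (esym (tens1s A)) (esym (tens1s B)) (prob s *: f);
  test_id : forall A, test [:: idT A];
  test_swap : forall A B, test [:: swapT A B];
  test_seq : forall A B C (s : seq 'rV_(dimT A B)) (t : seq 'rV_(dimT B C)),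
      test s -> test t -> test [seq comp g f | f <- s, g <- t];
  test_par : forall A B C D (s : seq 'rV_(dimT A B)) (t : seq 'rV_(dimT C D)),
      test s -> test t -> test [seq par f g | f <- s, g <- t];
  test_perm : forall A B (s t : seq 'rV_(dimT A B)), test s -> perm_eq s t -> test t;
  test_coarse : forall A B (f g : 'rV_(dimT A B)) s, test (f :: g :: s) -> test (f + g :: s);
  test_conv : forall A B (s t : seq 'rV_(dimT A B)) (p : R), test s -> test t ->
      size s = size t -> 0 <= p <= 1 ->
      test [seq p *: x.1 + (1 - p) *: x.2 | x <- zip s t];
  test_prob : forall (s : seq 'rV_(dimT sI sI)), test s ->
      (forall x, x \in s -> 0 <= prob x) /\ \sum_(x <- s) prob x <= 1;
  test_dilation : forall A B (s : seq 'rV_(dimT A B)), test s ->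
      exists E (C : 'rV_(dimT A (tens B E))) (e : seq 'rV_(dimT E sI)),
        test [:: C] /\ test e /\
        s = [seq castTr erefl (tenss1 B) (comp (par (idT B) a) C) | a <- e];
  transf_compact : forall A B, compact [set f : 'rV[R]_(dimT A B) | exists s, test s /\ f \in s];
  channel_compact : forall A B, compact [set f : 'rV[R]_(dimT A B) | test [:: f]]
}.

Arguments sys {R}.
Arguments sI {R}.
Arguments tens {R _}.
Arguments tenss1 {R _}.
Arguments dimT {R _}.
Arguments comp {R _ A B C}.
Arguments par {R _ A B C D}.
Arguments idT {R _}.
Arguments prob {R _}.
Arguments test {R _ A B}.

Section OPTnotions.
Variables (R : realType) (Θ : OPT R).
Local Notation Tr A B := ('rV[R]_(@dimT R Θ A B)).
Local Notation I := (sI Θ).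

Definition transf A B (f : Tr A B) : Prop := exists s, test s /\ f \in s.
Definition channel A B (f : Tr A B) : Prop := test [:: f].
Definition pr A (a : Tr A I) (rho : Tr I A) : R := prob (comp a rho).

Definition reversible A B (U : Tr A B) : Prop :=
  channel U /\ exists V : Tr B A, channel V /\ comp V U = idT A /\ comp U V = idT B.

Definition pure A B (C : Tr A B) : Prop :=
  transf C /\
  forall (s : seq (Tr A B)) (m : bitseq), test s ->
    C = \sum_(D <- mask m s) D ->
    forall D, D \in mask m s -> exists p : R, 0 <= p /\ D = p *: C.

Definition det_effect A (u : Tr A I) : Prop := channel u.

Definition normalized A (rho : Tr I A) : Prop :=
  transf rho /\ forall u : Tr A I, det_effect u -> pr u rho = 1.

Definition is_marginal A B (rho : Tr I A) (rhoAB : Tr I (tens A B)) : Prop :=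
  forall u : Tr B I, det_effect u ->
    castTr erefl (tenss1 A) (comp (par (idT A) u) rhoAB) = rho.

Definition purifies A B (rho : Tr I A) (Psi : Tr I (tens A B)) : Prop :=
  pure Psi /\ normalized Psi /\ is_marginal rho Psi.

Definition causality : Prop :=
  forall A : sys Θ,
    (exists u : Tr A I, det_effect u /\ forall u', det_effect u' -> u' = u) /\
    forall (s : seq (Tr A I)) (u : Tr A I), test s -> det_effect u -> \sum_(a <- s) a = u.

Definition purity_preservation : Prop :=
  (forall A B C (g : Tr B C) (f : Tr A B), pure f -> pure g -> pure (comp g f)) /\
  (forall A B C D (f : Tr A B) (g : Tr C D), pure f -> pure g -> pure (par f g)).

Definition pure_sharpness : Prop :=
  forall A : sys Θ, exists (a : Tr A I) (rho : Tr I A), pure a /\ transf rho /\ pr a rho = 1.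

Definition purification : Prop :=
  forall (A : sys Θ) (rho : Tr I A), normalized rho ->
    (exists (B : sys Θ) (Psi : Tr I (tens A B)), purifies rho Psi) /\
    (forall (B : sys Θ) (Psi Psi' : Tr I (tens A B)), purifies rho Psi -> purifies rho Psi' ->
       exists U : Tr B B, reversible U /\ Psi' = comp (par (idT A) U) Psi).

Definition sharp_theory_with_purification : Prop :=
  [/\ causality, purity_preservation, pure_sharpness & purification].

Definition nontrivial (A : sys Θ) : Prop := ~ exists U : Tr A I, reversible U.

Definition invariant_state A (chi : Tr I A) : Prop :=
  normalized chi /\ forall U : Tr A A, reversible U -> comp U chi = chi.

Definition perf_dist A (r : nat) (alpha : 'I_r -> Tr I A) : Prop :=
  (forall i, normalized (alpha i)) /\
  exists s : seq (Tr A I), test s /\ size s = r /\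
    forall i j : 'I_r, pr (nth 0 s j) (alpha i) = (i == j)%:R.

Definition diagonalization A (rho : Tr I A) (r : nat) (p : 'I_r -> R)
    (alpha : 'I_r -> Tr I A) : Prop :=
  [/\ forall i, 0 < p i, \sum_i p i = 1, forall i, pure (alpha i),
      perf_dist alpha & rho = \sum_i p i *: alpha i].

End OPTnotions.

(* Main.v *)
Require Import Defs.
From HB Require Import structures.
From mathcomp Require Import all_boot all_order all_algebra.
From mathcomp Require Import all_classical all_reals all_analysis.
From mathcomp Require Import lra.
Import Order.TTheory GRing.Theory Num.Theory.
Import numFieldTopology.Exports.
Local Open Scope ring_scope.
Local Notation cmp := Defs.comp.

Lemma comp_addr (R : realType) (Θ : OPT R) (A B C : sys Θ)
  (g : 'rV[R]_(dimT B C)) (f1 f2 : 'rV[R]_(dimT A B)) :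
  cmp g (f1 + f2) = cmp g f1 + cmp g f2.
Proof. by have := comp_linr 1 g f1 f2; rewrite !scale1r. Qed.

Lemma comp_0r (R : realType) (Θ : OPT R) (A B C : sys Θ)
  (g : 'rV[R]_(dimT B C)) : cmp g (0 : 'rV[R]_(dimT A B)) = 0.
Proof.
have := comp_linr (-1) g (0 : 'rV[R]_(dimT A B)) 0; rewrite scaler0 addr0 scaleN1r => ->.
by rewrite addrC subrr.
Qed.

Lemma comp_Zr (R : realType) (Θ : OPT R) (A B C : sys Θ)
  (g : 'rV[R]_(dimT B C)) (a : R) (f : 'rV[R]_(dimT A B)) :
  cmp g (a *: f) = a *: cmp g f.
Proof. by have := comp_linr a g f (0 : 'rV[R]_(dimT A B)); rewrite !addr0 comp_0r addr0. Qed.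

Lemma comp_sumr (R : realType) (Θ : OPT R) (A B C : sys Θ) (n : nat)
  (g : 'rV[R]_(dimT B C)) (F : 'I_n -> 'rV[R]_(dimT A B)) :
  cmp g (\sum_i F i) = \sum_i cmp g (F i).
Proof.
by apply: (big_morph (cmp g)); [exact: comp_addr | exact: comp_0r].
Qed.

Lemma prob_add (R : realType) (Θ : OPT R) (x y : 'rV[R]_(dimT (sI Θ) (sI Θ))) :
  prob (x + y) = prob x + prob y.
Proof. by have := prob_lin 1 x y; rewrite scale1r mul1r. Qed.

Lemma prob_0 (R : realType) (Θ : OPT R) : prob (0 : 'rV[R]_(dimT (sI Θ) (sI Θ))) = 0.
Proof.
have := prob_lin 1 (0 : 'rV[R]_(dimT (sI Θ) (sI Θ))) 0; rewrite scale1r addr0 mul1r.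
by move=> h; lra.
Qed.

Lemma prob_Z (R : realType) (Θ : OPT R) (a : R) (x : 'rV[R]_(dimT (sI Θ) (sI Θ))) :
  prob (a *: x) = a * prob x.
Proof. by have := prob_lin a x (0 : 'rV[R]_(dimT (sI Θ) (sI Θ))); rewrite !addr0 prob_0 addr0. Qed.

Lemma prob_sum (R : realType) (Θ : OPT R) (n : nat)
  (F : 'I_n -> 'rV[R]_(dimT (sI Θ) (sI Θ))) :
  prob (\sum_i F i) = \sum_i prob (F i).
Proof.
by apply: (big_morph prob); [exact: prob_add | exact: prob_0].
Qed.

Lemma transf_comp (R : realType) (Θ : OPT R) (A B C : sys Θ)
  (g : 'rV[R]_(dimT B C)) (f : 'rV[R]_(dimT A B)) :
  transf f -> transf g -> transf (cmp g f).
Proof.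
move=> [s [ts fs]] [t [tt gt]]; exists [seq cmp g f | f <- s, g <- t]; split.
  exact: test_seq.
exact: (allpairs_f (fun f g => cmp g f)).
Qed.

Lemma prob_ge0 (R : realType) (Θ : OPT R) (x : 'rV[R]_(dimT (sI Θ) (sI Θ))) :
  transf x -> 0 <= prob x.
Proof. by move=> [s [ts xs]]; have [H _] := test_prob ts; exact: H. Qed.
Lemma castTr_id (R : realType) (Θ : OPT R) (A B : sys Θ) (e1 : A = A) (e2 : B = B)
  (x : 'rV[R]_(dimT A B)) : castTr e1 e2 x = x.
Proof. by rewrite (Prop_irrelevance e1 erefl) (Prop_irrelevance e2 erefl). Qed.

Lemma comp_cast (R : realType) (Θ : OPT R) (A A' B B' C C' : sys Θ)
  (eA : A = A') (eB : B = B') (eC : C = C')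
  (g : 'rV[R]_(dimT B C)) (f : 'rV[R]_(dimT A B)) :
  Defs.comp (castTr eB eC g) (castTr eA eB f) = castTr eA eC (Defs.comp g f).
Proof. by case: A' / eA; case: B' / eB; case: C' / eC. Qed.

Lemma castTr_inj (R : realType) (Θ : OPT R) (A A' B B' : sys Θ)
  (eA : A = A') (eB : B = B') (x y : 'rV[R]_(dimT A B)) :
  castTr eA eB x = castTr eA eB y -> x = y.
Proof. by case: A' / eA; case: B' / eB. Qed.

Lemma pure_cast (R : realType) (Θ : OPT R) (A A' B B' : sys Θ)
  (eA : A = A') (eB : B = B') (x : 'rV[R]_(dimT A B)) :
  pure x -> pure (castTr eA eB x).
Proof. by case: A' / eA; case: B' / eB. Qed.

Lemma normalized_cast (R : realType) (Θ : OPT R) (B B' : sys Θ)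
  (eB : B = B') (x : 'rV[R]_(dimT (sI Θ) B)) :
  normalized x -> normalized (castTr erefl eB x).
Proof. by case: B' / eB. Qed.

Lemma castTr_comp2 (R : realType) (Θ : OPT R) (A A' A'' B B' B'' : sys Θ)
  (e1 : A = A') (e1' : A' = A'') (e2 : B = B') (e2' : B' = B'')
  (x : 'rV[R]_(dimT A B)) :
  castTr e1' e2' (castTr e1 e2 x) = castTr (etrans e1 e1') (etrans e2 e2') x.
Proof. by case: A'' / e1'; case: B'' / e2'; case: A' / e1; case: B' / e2. Qed.

Lemma transitivity (R : realType) (Θ : OPT R) :
  causality Θ -> purification Θ ->
  forall (A : sys Θ) (a b : 'rV[R]_(dimT (sI Θ) A)),
  pure a -> normalized a -> pure b -> normalized b ->
  exists U : 'rV[R]_(dimT A A), reversible U /\ b = cmp U a.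
Proof.
move=> caus purif A a b pa na pb nb.
have nI : normalized (idT (sI Θ)).
  split; first by exists [:: idT _]; split; [exact: test_id | by rewrite inE].
  move=> u du; have [[u0 [du0 hu0]] _] := caus (sI Θ).
  have -> : u = idT _ by rewrite (hu0 u du) (hu0 _ (test_id _)).
  by rewrite /pr comp_idr prob_id.
have [_ uniq] := purif _ _ nI.
have key : forall x : 'rV[R]_(dimT (sI Θ) A), pure x -> normalized x ->
    purifies (idT (sI Θ)) (castTr erefl (esym (tens1s A)) x).
  move=> x px nx; split; first exact: pure_cast.
  split; first exact: normalized_cast.
  move=> u du; rewrite par_unitl comp_cast castTr_comp2 castTr_id.
  apply: prob_inj; rewrite prob_id; exact: (nx.2 u du).
have [U [rU hU]] := uniq A _ _ (key a pa na) (key b pb nb).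
exists U; split=> //.
move: hU; rewrite par_unitl comp_cast; exact: castTr_inj.
Qed.
Arguments transitivity {R Θ} caus purif {A a b}.

Lemma keyK (R : realType) (Θ : OPT R) :
  causality Θ -> purification Θ ->
  forall (A : sys Θ) (chi : 'rV[R]_(dimT (sI Θ) A)), invariant_state chi ->
  forall r (p : 'I_r -> R) alpha, diagonalization chi p alpha ->
  forall n (q : 'I_n -> R) (beta : 'I_n -> 'rV[R]_(dimT (sI Θ) A)),
  (forall l, 0 <= q l) -> (forall l, pure (beta l) /\ normalized (beta l)) ->
  chi = \sum_l q l *: beta l -> forall i l0, q l0 <= p i.
Proof.
move=> caus purif A chi inv r p alpha [pp sp pa [na [s [ts [ss hs]]]] chiE].
move=> n q beta q0 hb chiE' i l0.
have [U [rU Ub]] := transitivity caus purif (hb l0).1 (hb l0).2 (pa i) (na i).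
set a := nth 0 s i.
have ta : transf a by exists s; split=> //; apply: mem_nth; rewrite ss.
have tU : transf U by exists [:: U]; split; [exact: rU.1 | by rewrite inE].
have E1 : pr a chi = p i.
  rewrite /pr {1}chiE comp_sumr prob_sum.
  under eq_bigr => j _ do rewrite comp_Zr prob_Z.
  rewrite (bigD1 i) //= big1 ?addr0.
    by have := hs i i; rewrite /pr eqxx => ->; rewrite mulr1.
  by move=> j /negbTE ji; have := hs j i; rewrite /pr ji => ->; rewrite mulr0.
have E2 : pr a chi = \sum_l q l * pr a (cmp U (beta l)).
  rewrite /pr -{1}(inv.2 U rU) {1}chiE' comp_sumr comp_sumr prob_sum.
  by apply: eq_bigr => l _; rewrite comp_Zr comp_Zr prob_Z.
rewrite -E1 E2 (bigD1 l0) //= -Ub.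
have -> : pr a (alpha i) = 1 by have := hs i i; rewrite eqxx.
rewrite mulr1 lerDl; apply: sumr_ge0 => l _; apply: mulr_ge0 => //.
apply: prob_ge0; apply: transf_comp => //; apply: transf_comp => //.
exact: (hb l).2.1.
Qed.
Arguments keyK {R Θ} _ _ {A chi} _ {r p alpha} _ {n q beta}.

Lemma unif (R : realType) (Θ : OPT R) :
  causality Θ -> purification Θ ->
  forall (A : sys Θ) (chi : 'rV[R]_(dimT (sI Θ) A)), invariant_state chi ->
  forall r (p : 'I_r -> R) alpha, diagonalization chi p alpha ->
  (0 < r)%N /\ forall i, p i = (r%:R)^-1.
Proof.
move=> caus purif A chi inv [|r] p alpha dg.
  by case: dg => _ sp _ _ _; move/eqP: sp; rewrite big_ord0 eq_sym oner_eq0.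
split=> //.
have dg' := dg; case: dg' => pp sp pa [na _] chiE.
have hb : forall l, pure (alpha l) /\ normalized (alpha l) by move=> l; split.
have q0 : forall l, 0 <= p l by move=> l; apply: ltW.
have eqp : forall i, p i = p ord0.
  move=> i; apply/eqP; rewrite eq_le.
  by rewrite (keyK caus purif inv dg q0 hb chiE) (keyK caus purif inv dg q0 hb chiE).
have nz : (r.+1%:R : R) != 0 by rewrite pnatr_eq0.
have h : r.+1%:R * p ord0 = 1.
  rewrite -[RHS]sp; under [RHS]eq_bigr => i _ do rewrite eqp.
  by rewrite sumr_const card_ord mulr_natl.
move=> i; rewrite eqp; apply: (mulfI nz); by rewrite h mulfV.
Qed.
Arguments unif {R Θ} _ _ {A chi} _ {r p alpha} _.

Theorem proposition14 (R : realType) (Θ : OPT R) :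
  sharp_theory_with_purification Θ ->
  forall (A : sys Θ), nontrivial A ->
  forall chi : 'rV[R]_(dimT (sI Θ) A), invariant_state chi ->
  exists d : nat, (0 < d)%N /\
    forall (r : nat) (p : 'I_r -> R) (alpha : 'I_r -> 'rV[R]_(dimT (sI Θ) A)),
      diagonalization chi p alpha -> r = d /\ (forall i, p i = (d%:R)^-1).
Proof.
move=> [caus _ _ purif] A _ chi inv.
case: (pselect (exists r (p : 'I_r -> R) (alpha : 'I_r -> 'rV[R]_(dimT (sI Θ) A)),
    diagonalization chi p alpha)) => [[r0 [p0 [a0 d0]]]|no]; last first.
  by exists 1%N; split=> // r p alpha dg; exfalso; apply: no; exists r, p, alpha.
have [r0pos hp0] := unif caus purif inv d0.
exists r0; split=> // r p alpha dg.
have [rpos hp] := unif caus purif inv dg.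
have d0' := d0; case: d0' => pp0 _ pa0 [na0 _] chiE0.
have dg' := dg; case: dg' => pp _ pa [na _] chiE.
have i0 : 'I_r0 := Ordinal r0pos.
have j0 : 'I_r := Ordinal rpos.
have le1 := keyK caus purif inv d0 (fun l => ltW (pp l)) (fun l => conj (pa l) (na l)) chiE i0 j0.
have le2 := keyK caus purif inv dg (fun l => ltW (pp0 l)) (fun l => conj (pa0 l) (na0 l)) chiE0 j0 i0.
have e : (r%:R : R)^-1 = (r0%:R)^-1.
  by apply/eqP; rewrite eq_le -(hp j0) -(hp0 i0) le1 le2.
have err : r = r0.
  by move/invr_inj: e => /eqP; rewrite eqr_nat => /eqP.
by split=> // i; rewrite hp err.
Qed.
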